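(* Let $f\colon\mathbb{R}^n\to\mathbb{R}$ be $f(x)=x^\top Ax+b^\top x+c$ with $A\in\mathbb{R}^{n\times n}$ symmetric, $b\in\mathbb{R}^n$, $c\in\mathbb{R}$. Let $C\colon[0,\infty)\to\mathbb{R}^{n\times n}$ solve $\dot C(t)=-2C(t)AC(t)$, with $C(0)$ invertible, and let $m(0)\in\mathbb{R}^n$. Then $m\colon[0,\infty)\to\mathbb{R}^n$ given by $$m(t)=C(t)\big(C(0)^{-1}m(0)-tb\big)$$ has initial value $m(0)$ and solves $\dot m(t)=-2C(t)Am(t)-C(t)b$.
   Context: The equations $\dot m=-2CAm-Cb$, $\dot C=-2CAC$ are the approximately Gaussian replicator flow (AGRF) equations for this quadratic $f$, i.e., the ODEs $\dot m_i=m_i\mathbb{E}[f(x)]-\mathbb{E}[x_if(x)]$, $\dot C_{ij}=(C_{ij}-m_im_j)\mathbb{E}[f(x)]-\mathbb{E}[x_ix_jf(x)]+m_i\mathbb{E}[x_jf(x)]+m_j\mathbb{E}[x_if(x)]$ with $x\sim\mathcal{N}(m(t),C(t))$, specialized to quadratic $f$. *)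

(* Defs.v *)
From HB Require Import structures.
From mathcomp Require Import all_boot all_order all_algebra.
From mathcomp Require Import all_classical all_reals all_analysis.
Set Implicit Arguments. Unset Strict Implicit. Unset Printing Implicit Defensive.
Import Order.TTheory GRing.Theory Num.Theory.
Import numFieldNormedType.Exports.
Local Open Scope classical_set_scope.
Local Open Scope ring_scope.

(* [g' t] is the derivative of [g] at [t], for every t in [0, oo),
   the derivative being taken within the domain [0, oo)
   (so at t = 0 it is the one-sided right derivative). *)
Definition deriv_on_nonneg (R : realType) (g g' : R -> R) : Prop :=
  forall t : R, 0 <= t ->
    (fun s => (g s - g t) / (s - t)) @ within [set s | 0 <= s /\ s != t] (nbhs t)
      --> g' t.

Definition mderiv_on_nonneg (R : realType) (p q : nat)
    (F F' : R -> 'M[R]_(p, q)) : Prop :=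
  forall (i : 'I_p) (j : 'I_q),
    deriv_on_nonneg (fun s => F s i j) (fun s => F' s i j).

Definition quad_f (R : realType) (n : nat) (A : 'M[R]_n) (b : 'cV[R]_n) (c : R)
    (x : 'cV[R]_n) : R :=
  ((x^T *m A *m x) 0 0) + ((b^T *m x) 0 0) + c.

(* Main.v *)
Require Import Defs.
From HB Require Import structures.
From mathcomp Require Import all_boot all_order all_algebra.
From mathcomp Require Import all_classical all_reals all_analysis.
From mathcomp Require Import ring.
Import Order.TTheory GRing.Theory Num.Theory.
Import numFieldNormedType.Exports.
Local Open Scope classical_set_scope.
Local Open Scope ring_scope.

Section S.
Context {R : realType}.
Notation W t := (within [set s : R | 0 <= s /\ s != t] (nbhs t)).

Lemma W_ev (t : R) : \forall s \near W t, s != t.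
Proof. by apply: filterS (near_withinT _ _) => s [_]. Qed.

Lemma deriv_ext (g g1 g2 : R -> R) : deriv_on_nonneg g g1 ->
  (forall t, 0 <= t -> g1 t = g2 t) -> deriv_on_nonneg g g2.
Proof. by move=> H E t t0; rewrite -E //; exact: H. Qed.

Lemma deriv_add (g h g' h' : R -> R) : deriv_on_nonneg g g' -> deriv_on_nonneg h h' ->
  deriv_on_nonneg (fun s => g s + h s) (fun s => g' s + h' s).
Proof.
move=> Hg Hh t t0.
apply: (cvg_trans _ (cvgD (Hg t t0) (Hh t t0))).
apply: near_eq_cvg; near=> s => /=.
by rewrite opprD addrACA mulrDl.
Unshelve. all: by end_near.
Qed.

Lemma deriv_cst (a : R) : deriv_on_nonneg (fun _ => a) (fun _ => 0).
Proof.
move=> t t0; apply: (cvg_trans _ (@cvg_cst R (0:R) R (W t) _)).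
apply: near_eq_cvg; near=> s => /=.
by rewrite subrr mul0r.
Unshelve. all: by end_near.
Qed.

Lemma deriv_lin (a b : R) : deriv_on_nonneg (fun s => a - s * b) (fun _ => - b).
Proof.
move=> t t0; apply: (cvg_trans _ (@cvg_cst R (- b) R (W t) _)).
apply: near_eq_cvg; near=> s => /=.
have st : s - t != 0 by rewrite subr_eq0; near: s; exact: W_ev.
rewrite (_ : a - s * b - (a - t * b) = - b * (s - t)); first by rewrite mulfK.
by ring.
Unshelve. all: by end_near.
Qed.

Lemma deriv_cont (h h' : R -> R) t : 0 <= t -> deriv_on_nonneg h h' ->
  h s @[s --> W t] --> h t.
Proof.
move=> t0 Hh.
have Hs : (fun s => s - t) @ W t --> (0:R).
  rewrite -(subrr t); apply: cvgB; last exact: cvg_cst.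
  exact: cvg_within.
have := cvgD (@cvg_cst R (h t) R (W t) _) (cvgM (Hh t t0) Hs).
rewrite mulr0 addr0 => HH.
apply: (cvg_trans _ (HH _ _ _)); apply: near_eq_cvg; near=> s => /=.
have st : s - t != 0 by rewrite subr_eq0; near: s; exact: W_ev.
change (h t + (h s - h t) / (s - t) * (s - t) = h s).
by rewrite mulfVK // addrC subrK.
Unshelve. all: by end_near.
Qed.

Lemma deriv_mul (g h g' h' : R -> R) : deriv_on_nonneg g g' -> deriv_on_nonneg h h' ->
  deriv_on_nonneg (fun s => g s * h s) (fun s => g' s * h s + g s * h' s).
Proof.
move=> Hg Hh t t0.
have HH := cvgD (cvgM (Hg t t0) (@deriv_cont h h' t t0 Hh)) (cvgM (@cvg_cst R (g t) R (W t) _) (Hh t t0)).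
have FW : Filter (W t) by exact: within_filter.
apply: (cvg_trans _ (HH FW FW FW FW)).
apply: near_eq_cvg; near=> s.
change ((g s - g t) / (s - t) * h s + g t * ((h s - h t) / (s - t)) = (g s * h s - g t * h t) / (s - t)).
by rewrite mulrAC mulrA -mulrDl; congr (_ / _); ring.
Unshelve. all: by end_near.
Qed.

Lemma deriv_sum (I : Type) (r : seq I) (F F' : I -> R -> R) :
  (forall k, deriv_on_nonneg (F k) (F' k)) ->
  deriv_on_nonneg (fun s => \sum_(k <- r) F k s) (fun s => \sum_(k <- r) F' k s).
Proof.
move=> H; elim: r => [|k r IH].
  rewrite (_ : (fun s => \sum_(k <- [::]) F k s) = fun _ => 0); last by apply: funext => s; rewrite big_nil.
  apply: deriv_ext; first exact: deriv_cst.
  by move=> t _; rewrite big_nil.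
rewrite (_ : (fun s => \sum_(j <- k :: r) F j s) = fun s => F k s + \sum_(j <- r) F j s); last by apply: funext => s; rewrite big_cons.
apply: (deriv_ext _ _ _ (deriv_add _ _ _ _ (H k) IH)).
by move=> t _; rewrite big_cons.
Qed.
End S.

Theorem proposition4 (R : realType) (n : nat) (A : 'M[R]_n) (b : 'cV[R]_n)
    (c : R) (C : R -> 'M[R]_n) (m0 : 'cV[R]_n) :
  A^T = A ->
  C 0 \in unitmx ->
  mderiv_on_nonneg C (fun t => - 2 *: (C t *m A *m C t)) ->
  let m := fun t : R => C t *m (invmx (C 0) *m m0 - t *: b) in
  m 0 = m0 /\
  mderiv_on_nonneg m (fun t => - 2 *: (C t *m A *m m t) - C t *m b).
Proof.
move=> _ HU HC m; split.
  by rewrite /m scale0r subr0 mulmxA mulmxV // mul1mx.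
move=> i j.
set v0 := invmx (C 0) *m m0.
have Em : (fun s => m s i j) = (fun s => \sum_k C s i k * (v0 k j - s * b k j)).
  apply: funext => s; rewrite /m !mxE; apply: eq_bigr => k _; by rewrite !mxE.
rewrite Em.
apply: (deriv_ext _ _ _ (deriv_sum _ _ (fun k s => C s i k * (v0 k j - s * b k j))
  (fun k s => (- 2 *: (C s *m A *m C s)) i k * (v0 k j - s * b k j) + C s i k * (- b k j)) _)).
  move=> k; exact: (deriv_mul _ _ _ _ (HC i k) (deriv_lin _ _)).
move=> t _.
have E : - 2 *: (C t *m A *m m t) - C t *m b =
   (- 2 *: (C t *m A *m C t)) *m (v0 - t *: b) + C t *m (- b).
  by rewrite /m -scalemxAl !mulmxA mulmxN.
rewrite E !mxE big_split /=; congr (_ + _); apply: eq_bigr => k _; by rewrite !mxE.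
Qed.
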